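(* Let $n\geq 2$ be an integer, let $m\neq\pm1$ be a square-free integer, let $\sqrt[n]{m}$ denote a root of $X^n-m$, and let $M=\mathbb{Q}(\sqrt[n]{m})$ with ring of integers $\mathcal{O}_M$. Then $$\frac{n}{\gcd(n,m)}\cdot \mathcal{O}_M\subset \mathbb{Z}[\sqrt[n]{m}].$$ *)

(* Defs.v *)
From mathcomp Require Import all_boot all_order all_algebra all_field.
Set Implicit Arguments. Unset Strict Implicit. Unset Printing Implicit Defensive.
Import GRing.Theory Num.Theory.
Local Open Scope ring_scope.

Definition squarefree_int (m : int) : Prop :=
  forall p : nat, prime p -> ~~ (p ^ 2 %| `|m|)%N.

Definition in_Qadj (a x : algC) : Prop :=
  exists p : {poly rat}, x = (map_poly ratr p).[a].

Definition in_Zadj (a x : algC) : Prop :=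
  exists p : {poly int}, x = (map_poly (fun z : int => z%:~R) p).[a].

Definition in_ringOfIntegers (a x : algC) : Prop :=
  in_Qadj a x /\ x \in Aint.

(* Main.v *)
Require Import Defs.
From mathcomp Require Import all_boot all_order all_algebra all_field.
From mathcomp Require Import zify ring.
Import GRing.Theory Num.Theory.
Local Open Scope ring_scope.

Lemma a_Aint (n : nat) (m : int) (a : algC) :
  (0 < n)%N -> a ^+ n = m%:~R -> a \in Aint.
Proof.
move=> n0 an; apply: (@root_monic_Aint ('X^n - (m%:~R)%:P)).
- by rewrite /root !hornerE an subrr.
- exact: monicXnsubC.
apply/polyOverP=> i; rewrite coefB coefC coefXn.
by apply: rpredB; [case: (i == n); rewrite ?rpred0 ?rpred1 | case: (i == 0%N); rewrite ?rpred0 ?rpred_int].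
Qed.

Lemma arith1 j k n : (k < j)%N -> (k < n)%N -> (j + (n.-1 - k) = n + (j.-1 - k))%N.
Proof. lia. Qed.
Lemma arith2 k n : (k < n)%N -> (k <= n.-1)%N.
Proof. lia. Qed.

Lemma eis (n : nat) (m : int) (a : algC) (p : nat) (b : nat -> int) :
  (0 < n)%N -> a ^+ n = m%:~R -> prime p -> (p %| `|m|)%N -> ~~ (p ^ 2 %| `|m|)%N ->
  (\sum_(i < n) (b i)%:~R * a ^+ i) / p%:R \in Aint ->
  forall i, (i < n)%N -> (p%:Z %| b i)%Z.
Proof.
move=> n0 an pr pm psq HA.
have ha := a_Aint _ _ _ n0 an.
have p0 : p%:R != 0 :> algC by rewrite pnatr_eq0 -lt0n prime_gt0.
have pmz : (p%:Z %| m)%Z by [].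
set m' := (m %/ p%:Z)%Z.
have Em : m = m' * p%:Z by rewrite divzK.
suff H : forall k i, (i < k)%N -> (i < n)%N -> (p%:Z %| b i)%Z.
  by move=> i; apply: H (ltnSn i).
elim=> [//|k IH] i; rewrite ltnS leq_eqVlt => /orP[/eqP -> kn|]; last exact: IH.
set S := \sum_(i < n) _ in HA.
pose t := (b k)%:~R * a ^+ n.-1 / p%:R.
have pz : (p%:Z)%:~R = p%:R :> algC by [].
have Ht : t \in Aint.
  have e : a ^+ n.-1 = a ^+ k * a ^+ (n.-1 - k) by rewrite -exprD subnKC // (arith2 _ _ kn).
  have -> : t = S / p%:R * a ^+ (n.-1 - k) -
     \sum_(j < n | j != Ordinal kn) (b j)%:~R * a ^+ (j + (n.-1 - k)) / p%:R.
    rewrite /S mulr_suml mulr_suml (bigD1 (Ordinal kn)) //=.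
    have -> : \sum_(i0 < n | i0 != Ordinal kn) (b i0)%:~R * a ^+ i0 / p%:R * a ^+ (n.-1 - k) = \sum_(j < n | j != Ordinal kn) (b j)%:~R * a ^+ (j + (n.-1 - k)) / p%:R.
      by apply: eq_bigr => j _; rewrite exprD; ring.
    by rewrite addrK /t e; ring.
  apply: rpredB; first by rewrite rpredM ?rpredX.
  apply: rpred_sum => j /= jk.
  have [jlk | jgk] := ltnP j k.
    set c := (b j %/ p%:Z)%Z.
    have -> : (b j)%:~R * a ^+ (j + (n.-1 - k)) / p%:R = c%:~R * a ^+ (j + (n.-1 - k)).
      rewrite -(divzK (IH j jlk (ltn_ord j))) -/c intrM pz; field; exact: p0.
    by rewrite rpredM ?rpredX ?rpred_int.
  have jk' : (k < j)%N by rewrite ltn_neqAle jgk andbT eq_sym.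
  rewrite (arith1 _ _ _ jk' kn).
  have -> : (b j)%:~R * a ^+ (n + (j.-1 - k)) / p%:R = (b j * m')%:~R * a ^+ (j.-1 - k).
    rewrite exprD an Em !intrM pz; field; exact: p0.
  by rewrite rpredM ?rpredX ?rpred_int.
have E : t ^+ n = ((b k) ^+ n * m ^+ n.-1)%:~R / (p ^ n)%:R.
  rewrite /t !exprMn -exprM mulnC exprM an natrX rmorphM /= !rmorphXn /=.
  by rewrite exprVn.
have Htn : t ^+ n \in Num.int.
  apply: Cint_rat_Aint; last exact: rpredX.
  by rewrite E rpred_div ?rpred_int ?rpred_nat.
move/intrP: Htn => [z]; rewrite E => Ez.
have Ez' : (b k) ^+ n * m ^+ n.-1 = z * (p%:Z) ^+ n.
  have Pnz : (p ^ n)%N%:R != 0 :> algC by rewrite pnatr_eq0 expn_eq0 negb_and -lt0n prime_gt0.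
  apply: (@intr_inj algC); rewrite [RHS]intrM rmorphXn /= pz -natrX -Ez divfK //.
move: Ez'; rewrite Em; set n' := n.-1.
have En : n = n'.+1 by rewrite prednK.
rewrite [in z * _]En exprMn exprS mulrA [_ * p%:Z]mulrC mulrA => /mulIf.
have pn0 : p%:Z ^+ n' != 0 by rewrite expf_neq0 // -lt0n prime_gt0.
move/(_ pn0) => /(congr1 absz); rewrite !abszM !abszX /= => H.
have : (p %| `|b k| ^ n * `|m'| ^ n')%N by rewrite H dvdn_mulr.
rewrite Euclid_dvdM // !Euclid_dvdX // => /orP[/andP[//]|/andP[pm' _]].
case/negP: psq; rewrite Em abszM /= expnS mulnC dvdn_mul //.
Qed.
Lemma exists_p (m : int) : squarefree_int m -> m != 1 -> m != -1 ->
  exists p, [/\ prime p, (p %| `|m|)%N & ~~ (p ^ 2 %| `|m|)%N].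
Proof.
move=> sq m1 m2.
have m0 : `|m|%N != 0%N.
  apply/negP => /eqP H; have := sq 2%N isT; by rewrite H dvdn0.
have m1' : (1 < `|m|)%N.
  case: m m1 m2 sq m0 => [[|[|k]]|[|k]] //.
exists (pdiv `|m|); split; [exact: pdiv_prime | exact: pdiv_dvd | exact/sq/pdiv_prime].
Qed.

Lemma indep_int (n : nat) (m : int) (a : algC) (b : nat -> int) :
  (0 < n)%N -> a ^+ n = m%:~R -> squarefree_int m -> m != 1 -> m != -1 ->
  \sum_(i < n) (b i)%:~R * a ^+ i = 0 -> forall i, (i < n)%N -> b i = 0.
Proof.
move=> n0 an sq m1 m2 Hs.
have [p [pr pm psq]] := exists_p _ sq m1 m2.
have p0 : p%:R != 0 :> algC by rewrite pnatr_eq0 -lt0n prime_gt0.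
have H : forall k (b : nat -> int), \sum_(i < n) (b i)%:~R * a ^+ i = 0 ->
    forall i, (i < n)%N -> ((p ^ k)%N%:Z %| b i)%Z.
  elim=> [|k IH] b0 Hb i ilt; first by rewrite expn0 dvd1z.
  have Hp := @eis n m a p b0 n0 an pr pm psq.
  rewrite Hb mul0r rpred0 in Hp.
  have Hp' := Hp isT.
  pose b' j := (b0 j %/ p%:Z)%Z.
  have Hb' : \sum_(i < n) (b' i)%:~R * a ^+ i = 0.
    apply: (mulIf p0); rewrite mul0r mulr_suml -[RHS]Hb; apply: eq_bigr => j _.
    by rewrite -[in RHS](divzK (Hp' j (ltn_ord j))) intrM; rewrite mulrAC.
  have := IH b' Hb' i ilt.
  move=> Hd; rewrite -(divzK (Hp' i ilt)).
  by rewrite expnS mulnC PoszM; apply: dvdz_mul Hd (dvdzz _).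
move=> i ilt; apply/eqP; apply: contraT => bi0.
have := H `|b i|%N b Hs i ilt; rewrite /dvdz /= => /dvdn_leq.
rewrite absz_gt0 => /(_ bi0) Hle.
by have := ltn_expl `|b i|%N (prime_gt1 pr); rewrite ltnNge Hle.
Qed.
Lemma indep_rat (n : nat) (m : int) (a : algC) (R : {poly rat}) :
  (0 < n)%N -> a ^+ n = m%:~R -> squarefree_int m -> m != 1 -> m != -1 ->
  (size R <= n)%N -> (map_poly ratr R).[a] = 0 -> R = 0.
Proof.
move=> n0 an sq m1 m2 szR.
have [q [d d0 ER]] := rat_poly_scale R.
have coefR i : R`_i = (d%:~R)^-1 * (q`_i)%:~R by rewrite ER coefZ coef_map.
rewrite (@horner_coef_wide _ n) ?size_map_poly //.
have -> : \sum_(i < n) (map_poly ratr R)`_i * a ^+ i =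
    ratr ((d%:~R)^-1) * \sum_(i < n) (q`_i)%:~R * a ^+ i.
  rewrite mulr_sumr; apply: eq_bigr => i _.
  by rewrite coef_map /= coefR rmorphM /= ratr_int mulrA.
move/eqP; rewrite mulf_eq0 fmorph_eq0 invr_eq0 intr_eq0 (negbTE d0) /= => /eqP Hs.
have Hq := @indep_int n m a (fun i => q`_i) n0 an sq m1 m2 Hs.
apply/polyP => i; rewrite coef0.
have [ilt|ige] := ltnP i n; first by rewrite coefR Hq // mulr0.
by rewrite nth_default // (leq_trans szR ige).
Qed.
Lemma fpoly_root (n : nat) (m : int) (c : algC) :
  c ^+ n = m%:~R -> (map_poly ratr ('X^n - (m%:~R)%:P : {poly rat})).[c] = 0.
Proof.
by move=> cn; rewrite rmorphB /= map_polyXn map_polyC /= ratr_int !hornerE cn subrr.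
Qed.

Lemma conj_Aint (n : nat) (m : int) (a b : algC) (P : {poly rat}) :
  (0 < n)%N -> a ^+ n = m%:~R -> squarefree_int m -> m != 1 -> m != -1 ->
  b ^+ n = m%:~R ->
  (map_poly ratr P).[a] \in Aint -> (map_poly ratr P).[b] \in Aint.
Proof.
move=> n0 an sq m1 m2 bn Hx.
set x := (map_poly ratr P).[a] in Hx.
have [h [Eh hmon] _] := minCpolyP x.
have Hint : minCpoly x \is a polyOver Num.int by exact: Hx.
pose f : {poly rat} := 'X^n - (m%:~R)%:P.
pose H := h \Po P.
have Ha : (map_poly ratr H).[a] = 0.
  by rewrite map_comp_poly horner_comp -Eh; apply/eqP; exact: root_minCpoly.
have Hrem : H %% f = 0.
  apply: (@indep_rat n m a _ n0 an sq m1 m2).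
    have : (size (H %% f)%R < size f)%N by rewrite ltn_modp -size_poly_eq0 size_XnsubC.
    by rewrite size_XnsubC.
  have := Ha; rewrite {1}(divp_eq H f) rmorphD rmorphM /= !hornerE.
  by rewrite fpoly_root // mulr0 add0r.
have Hb : (map_poly ratr H).[b] = 0.
  by rewrite (divp_eq H f) Hrem addr0 rmorphM /= hornerE fpoly_root // mulr0.
apply: (@root_monic_Aint (minCpoly x)); last exact: Hint.
  by rewrite /root Eh -horner_comp -map_comp_poly Hb.
exact: minCpoly_monic.
Qed.
Lemma geo (n : nat) (w : algC) : w ^+ n = 1 ->
  \sum_(k < n) w ^+ k = if w == 1 then n%:R else 0.
Proof.
move=> wn; case: eqP => [->|/eqP w1].
  by rewrite (eq_bigr (fun _ => 1)) ?sumr_const ?card_ord // => k _; rewrite expr1n.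
have := subrX1 w n; rewrite wn subrr => /esym/eqP; rewrite mulf_eq0 subr_eq0 (negbTE w1) /=.
by move/eqP.
Qed.

Lemma arith3 i j n : (i < n)%N -> (j < n)%N -> (n %| n - j + i)%N = (i == j).
Proof.
move=> ilt jlt; case: (ltngtP i j) => h.
- apply/negP => /dvdn_leq; have H : (0 < n - j + i)%N by lia.
  move/(_ H); lia.
- have -> : (n - j + i = n + (i - j))%N by lia.
  rewrite dvdn_addr //; apply/negP => /dvdn_leq; have H : (0 < i - j)%N by lia.
  move/(_ H); lia.
- by rewrite h subnK ?dvdnn // ltnW.
Qed.

Lemma trace_Aint (n : nat) (m : int) (a : algC) (R : {poly rat}) (j : nat) :
  (0 < n)%N -> a ^+ n = m%:~R -> squarefree_int m -> m != 1 -> m != -1 ->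
  (size R <= n)%N -> (map_poly ratr R).[a] \in Aint -> (j < n)%N ->
  n%:R * ratr R`_j * a ^+ j \in Aint.
Proof.
move=> n0 an sq m1 m2 szR Hx jlt.
have [z zp] := C_prim_root_exists n0.
have zA := Aint_prim_root zp.
have zn := prim_expr_order zp.
pose T := \sum_(k < n) z ^+ (k * (n - j)) * (map_poly ratr R).[z ^+ k * a].
have HT : T \in Aint.
  apply: rpred_sum => k _; apply: rpredM; first exact: rpredX.
  apply: (@conj_Aint n m a) => //.
  by rewrite exprMn -exprM mulnC exprM zn expr1n mul1r.
suff <- : T = n%:R * ratr R`_j * a ^+ j by [].
have E1 : T = \sum_(i < n) ratr R`_i * a ^+ i * \sum_(k < n) (z ^+ (n - j + i)) ^+ k.
  rewrite /T.
  under eq_bigr => k _ do rewrite (@horner_coef_wide _ n) ?size_map_poly // mulr_sumr.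
  rewrite exchange_big /=; apply: eq_bigr => i _; rewrite mulr_sumr; apply: eq_bigr => k _.
  rewrite coef_map /= -!exprM exprMn -!exprM.
  rewrite [in RHS]mulnC mulnDr [(k * (n - j))%N]mulnC exprD.
  ring.
rewrite E1 (bigD1 (Ordinal jlt)) //= [X in _ + X]big1 ?addr0.
  rewrite geo; last by rewrite -exprM mulnC exprM zn expr1n.
  rewrite -(prim_order_dvd zp) arith3 // eqxx; ring.
move=> i /eqP ij; rewrite geo; last by rewrite -exprM mulnC exprM zn expr1n.
rewrite -(prim_order_dvd zp) arith3 //.
have -> : (i == j :> nat) = false.
  by apply/negP => /eqP ij'; apply: ij; apply: val_inj.
by rewrite mulr0.
Qed.
Lemma iter_eis (n : nat) (m : int) (a y : algC) :
  (0 < n)%N -> a ^+ n = m%:~R -> squarefree_int m -> y \in Aint ->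
  forall q : nat, (0 < q)%N -> (forall p, prime p -> (p %| q)%N -> (p %| `|m|)%N) ->
  forall b : nat -> int, y * q%:R = \sum_(i < n) (b i)%:~R * a ^+ i ->
  forall i, (i < n)%N -> (q%:Z %| b i)%Z.
Proof.
move=> n0 an sq yA; elim/ltn_ind => q IH q0 Hq b Hb i ilt.
have [q1|q1] := eqVneq q 1%N; first by rewrite q1 dvd1z.
have q1' : (1 < q)%N by rewrite ltn_neqAle eq_sym q1 q0.
set p := pdiv q.
have pr : prime p := pdiv_prime q1'.
have pq : (p %| q)%N := pdiv_dvd q.
set q' := (q %/ p)%N.
have Eq : q = (q' * p)%N by rewrite divnK.
have p0 : p%:R != 0 :> algC by rewrite pnatr_eq0 -lt0n prime_gt0.
have pb : forall i, (i < n)%N -> (p%:Z %| b i)%Z.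
  apply: (@eis n m a p b n0 an pr (Hq p pr pq) (sq p pr)).
  by rewrite -Hb Eq natrM mulrA mulfK // rpredM // rpred_nat.
pose b' i := (b i %/ p%:Z)%Z.
have q'0 : (0 < q')%N by rewrite divn_gt0 ?prime_gt0 // dvdn_leq.
have q'lt : (q' < q)%N by rewrite ltn_Pdiv ?prime_gt1.
have Hb' : y * q'%:R = \sum_(i < n) (b' i)%:~R * a ^+ i.
  apply: (mulIf p0); rewrite -mulrA -natrM -Eq Hb mulr_suml; apply: eq_bigr => j _.
  by rewrite -[in LHS](divzK (pb j (ltn_ord j))) intrM mulrAC.
have := IH q' q'lt q'0 (fun p pr pd => Hq p pr (dvdn_trans pd (dvdn_div pq))) b' Hb' i ilt.
move=> Hd; rewrite -(divzK (pb i ilt)) Eq PoszM; exact: dvdz_mul Hd (dvdzz _).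
Qed.

Lemma LR (k : nat) (r : rat) : ratr (k%:R * r) = k%:R * ratr r :> algC.
Proof. by rewrite rmorphM /= ratr_nat. Qed.

Theorem theorem2p3 (n : nat) (m : int) (a : algC) :
  (2 <= n)%N -> squarefree_int m -> m != 1 -> m != -1 ->
  a ^+ n = m%:~R ->
  forall x : algC, in_ringOfIntegers a x ->
    in_Zadj a ((n %/ gcdn n `|m|)%N%:R * x).
Proof.
move=> n2 sq m1 m2 an x [[P ->] xA].
have n0 : (0 < n)%N by apply: ltnW.
pose f : {poly rat} := 'X^n - (m%:~R)%:P.
set R := (P %% f)%R.
have szR : (size R <= n)%N.
  have : (size R < size f)%N by rewrite ltn_modp -size_poly_eq0 size_XnsubC.
  by rewrite size_XnsubC.
have ER : (map_poly ratr P).[a] = (map_poly ratr R).[a].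
  by rewrite {1}(divp_eq P f) rmorphD rmorphM /= !hornerE fpoly_root // mulr0 add0r.
rewrite ER in xA |- *.
have m0 : (0 < `|m|)%N.
  rewrite lt0n; apply/negP => /eqP H; have := sq 2%N isT; by rewrite H dvdn0.
set g := gcdn n `|m|.
have g0 : (0 < g)%N by rewrite gcdn_gt0 n0.
have gn : (g %| n)%N := dvdn_gcdl n `|m|.
have gm : (g %| `|m|)%N := dvdn_gcdr n `|m|.
have aA := a_Aint _ _ _ n0 an.
have Hm : (`|m|%N)%:R = (sgz m)%:~R * m%:~R :> algC by rewrite -intrM -abszEsg.
have hv j : (j < n)%N -> (n * `|m|)%N%:R * R`_j \in Num.int.
  move=> jlt.
  have T := @trace_Aint n m a R j n0 an sq m1 m2 szR xA jlt.
  have W : (ratr ((n * `|m|)%N%:R * R`_j) : algC) \in Num.int.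
    apply: Cint_rat_Aint; first exact: Crat_rat.
    have -> : ratr ((n * `|m|)%N%:R * R`_j) =
        n%:R * ratr R`_j * a ^+ j * a ^+ (n - j) * (sgz m)%:~R.
      have e : a ^+ j * a ^+ (n - j) = m%:~R by rewrite -exprD (subnKC (ltnW jlt)).
      rewrite rmorphM /= ratr_nat natrM Hm -e; ring.
    by rewrite rpredM ?rpred_int // rpredM // rpredX.
  move/intrP: W => [z Hz].
  have -> : (n * `|m|)%N%:R * R`_j = z%:~R.
    apply: (@fmorph_inj _ algC ratr).
    exact: (etrans Hz (esym (ratr_int _ z))).
  exact: rpred_int.
pose b j := Num.floor ((n * `|m|)%N%:R * R`_j).
have Hb j : (j < n)%N -> (b j)%:~R = (n * `|m|)%N%:R * R`_j.
  by move=> jlt; rewrite /b floorK // hv.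
set y := (n %/ g)%N%:R * (map_poly ratr R).[a].
have yA : y \in Aint by rewrite rpredM // rpred_nat.
have Nm : (n * `|m|)%N = ((n %/ g) * (g * `|m|))%N by rewrite mulnA divnK.
have E : y * (g * `|m|)%N%:R = \sum_(i < n) (b i)%:~R * a ^+ i.
  rewrite /y (@horner_coef_wide _ n) ?size_map_poly // mulr_sumr mulr_suml.
  apply: eq_bigr => i _; rewrite coef_map /=.
  have -> : (b i)%:~R = (n * `|m|)%N%:R * ratr R`_i :> algC.
    exact: (etrans (esym (ratr_int _ (b i))) (etrans (congr1 ratr (Hb i (ltn_ord i))) (LR _ _))).
  rewrite Nm natrM; ring.
have Hpr : forall p, prime p -> (p %| g * `|m|)%N -> (p %| `|m|)%N.
  move=> p pr; rewrite Euclid_dvdM // => /orP[pg|//]; exact: dvdn_trans pg gm.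
have gm0 : (0 < g * `|m|)%N by rewrite muln_gt0 g0 m0.
have D := @iter_eis n m a y n0 an sq yA (g * `|m|)%N gm0 Hpr b E.
pose e i := (b i %/ (g * `|m|)%N%:Z)%Z.
have gmR : (g * `|m|)%N%:R != 0 :> algC by rewrite pnatr_eq0 -lt0n.
have He i : (i < n)%N -> (e i)%:~R = (n %/ g)%N%:R * ratr R`_i :> algC.
  move=> ilt; apply: (mulIf gmR).
  have -> : (e i)%:~R * (g * `|m|)%N%:R = (b i)%:~R :> algC.
    by rewrite /e -[in RHS](divzK (D i ilt)) intrM.
  rewrite (etrans (esym (ratr_int _ (b i))) (etrans (congr1 ratr (Hb i ilt)) (LR _ _))).
  by rewrite Nm natrM; ring.
exists (\poly_(i < n) e i).
rewrite /y (@horner_coef_wide _ n) ?size_map_poly // (@horner_coef_wide _ n).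
  rewrite mulr_sumr; apply: eq_bigr => i _.
  rewrite coef_map /= coef_map /= coef_poly ltn_ord He //; ring.
by rewrite map_polyE; apply: leq_trans (size_Poly _) _; rewrite size_map size_poly.
Qed.
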